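(* Let $G$ be a graph, $P$ a non-trivial prime graph in a split decomposition of $G$, $k$ a positive integer, and $(T,\delta)$ a branch decomposition of $G$ of sm-width less than $k$. Let $a\in V(P)$ and let $(X,Y)$ be a cut of $G$ induced by an edge of $T$. If $|X\cap\operatorname{act}(a:P)|\ge k$ and $|Y\cap \operatorname{act}(N_P(a):P)|\ge k$, then $(X,Y)$ is a split of $G$.
   Context: Graphs are finite, simple, undirected; $\overline{A}=V(G)\setminus A$; $N(S)=N_G(S)=(\bigcup_{v\in S}N(v))\setminus S$; $G[A,B]$ is the bipartite graph on $A\cup B$ with the edges of $G$ between $A$ and $B$. A split of a connected graph $G$ is a partition $(V_1,V_2)$ of $V(G)$ with $|V_1|,|V_2|\ge2$ such that every vertex of $V_1$ with a neighbour in $V_2$ has the same neighbourhood in $V_2$. $\operatorname{mm}(A)$ is the maximum size of a matching in $G[A,\overline A]$, and $\operatorname{sm}(A)=1$ if $(A,\overline A)$ is a split of $G$, otherwise $\operatorname{sm}(A)=\operatorname{mm}(A)$. A branch decomposition $(T,\delta)$ of $G$ is a tree $T$ of maximum degree $3$ with a bijection $\delta$ from the leaves of $T$ to $V(G)$; each edge $e$ of $T$ induces the cut $(A,\overline A)$ where $A$ is the set of $\delta$-images of the leaves in one component of $T-e$. The sm-width of $(T,\delta)$ is the maximum of $\operatorname{sm}(A)$ over cuts induced by edges of $T$; the sm-width $\operatorname{smw}(G)$ of $G$ is the minimum over all branch decompositions. Split decomposition: decomposing along a split $(V_1,V_2)$ gives $G_1=G[V_1]$ plus a new marker $v$ adjacent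 to $N_G(V_2)$ and $G_2=G[V_2]$ plus the same marker adjacent to $N_G(V_1)$; a graph with no split is prime, non-trivial if it has more than 3 vertices; a split decomposition recursively decomposes until all parts are prime, with the split decomposition tree having prime graphs as nodes adjacent iff they share a marker. For $v\in V(G_i)$ ($G_i$ a prime graph of the decomposition), $\operatorname{tot}(v:G_i)=\{v\}$ if $v\in V(G)$, and otherwise (marker shared with $G_j$) the set of vertices of $V(G)$ in the prime graphs of the component of the tree minus $G_i$ containing $G_j$. $\operatorname{act}(v:G_i)=N_G(V(G)\setminus \operatorname{tot}(v:G_i))$, and for $V'\subseteq V(G_i)$, $\operatorname{act}(V':G_i)=\bigcup_{v\in V'}\operatorname{act}(v:G_i)$. *)

(* Defs.v *)
From mathcomp Require Import all_boot.
Set Implicit Arguments.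
Unset Strict Implicit.
Unset Printing Implicit Defensive.

Section Defs.
Variable U : finType.

(* A graph with vertex set gV inside a universe U (markers live in U too);
   only gE restricted to gV matters. *)
Record graph := Graph { gV : {set U}; gE : rel U }.

Definition grel (G : graph) : rel U :=
  [rel x y | [&& x \in gV G, y \in gV G & gE G x y]].

Definition connected_graph (G : graph) : Prop :=
  forall x y, x \in gV G -> y \in gV G -> connect (grel G) x y.

Definition nbhd (G : graph) (S : {set U}) : {set U} :=
  [set y in gV G | (y \notin S) && [exists x in S, (x \in gV G) && gE G x y]].

Definition nbrs (G : graph) (a : U) : {set U} :=
  [set y in gV G | (y != a) && gE G a y].

Definition is_split (G : graph) (V1 : {set U}) : bool :=
  let V2 := gV G :\: V1 in
  [&& V1 \subset gV G, 1 < #|V1|, 1 < #|V2| &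
   [forall x in V1, forall y in V1,
     ([exists z in V2, gE G x z] && [exists z in V2, gE G y z]) ==>
     ([set z in V2 | gE G x z] == [set z in V2 | gE G y z])]].

Definition prime_graph (G : graph) : bool := ~~ [exists V1, is_split G V1].

Definition split_left (G : graph) (V1 : {set U}) (m : U) : graph :=
  let V2 := gV G :\: V1 in
  Graph (m |: V1)
    [rel x y | [|| [&& x \in V1, y \in V1 & gE G x y],
                   (x == m) && (y \in nbhd G V2) |
                   (y == m) && (x \in nbhd G V2)]].

Definition split_right (G : graph) (V1 : {set U}) (m : U) : graph :=
  let V2 := gV G :\: V1 in
  Graph (m |: V2)
    [rel x y | [|| [&& x \in V2, y \in V2 & gE G x y],
                   (x == m) && (y \in nbhd G V1) |
                   (y == m) && (x \in nbhd G V1)]].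

Definition parts_verts (p : seq graph) : {set U} := \bigcup_(H <- p) gV H.

Inductive split_decomp : graph -> seq graph -> Prop :=
| sd_prime G : prime_graph G -> split_decomp G [:: G]
| sd_split G V1 m p1 p2 :
    is_split G V1 -> m \notin gV G ->
    split_decomp (split_left G V1 m) p1 ->
    split_decomp (split_right G V1 m) p2 ->
    parts_verts p1 :&: parts_verts p2 = [set m] ->
    split_decomp G (p1 ++ p2).

(* the split decomposition tree: prime graphs adjacent iff they share a marker *)
Definition sd_adj (G : graph) (p : seq graph) : rel 'I_(size p) :=
  fun (j l : 'I_(size p)) => (j != l) &&
     [exists u, [&& u \notin gV G, u \in gV (nth G p j) & u \in gV (nth G p l)]].

Definition sd_adj_minus (G : graph) (p : seq graph) (i : 'I_(size p)) :
  rel 'I_(size p) :=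
  fun (j l : 'I_(size p)) => [&& j != i, l != i & @sd_adj G p j l].

Definition tot (G : graph) (p : seq graph) (i : 'I_(size p)) (v : U) : {set U} :=
  if v \in gV G then [set v]
  else [set x in gV G | [exists j : 'I_(size p), exists l : 'I_(size p),
          [&& j != i, v \in gV (nth G p j), connect (@sd_adj_minus G p i) j l
            & x \in gV (nth G p l)]]].

Definition act (G : graph) (p : seq graph) (i : 'I_(size p)) (v : U) : {set U} :=
  nbhd G (gV G :\: @tot G p i v).

Definition act_set (G : graph) (p : seq graph) (i : 'I_(size p)) (V' : {set U})
  : {set U} := \bigcup_(v in V') @act G p i v.

Definition is_matching (G : graph) (A : {set U}) (M : {set U * U}) : bool :=
  [forall q in M, [&& q.1 \in A, q.2 \in gV G :\: A & gE G q.1 q.2]] &&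
  [forall q in M, forall r in M, ((q.1 == r.1) || (q.2 == r.2)) ==> (q == r)].

Definition mm (G : graph) (A : {set U}) : nat :=
  \max_(M : {set U * U} | is_matching G A M) #|M|.

Definition sm (G : graph) (A : {set U}) : nat :=
  if is_split G A then 1 else mm G A.

End Defs.

Section Branch.
Variables (U N : finType).

Definition remove_edge (t : rel N) (u w : N) : rel N :=
  [rel x y | t x y && ~~ (((x == u) && (y == w)) || ((x == w) && (y == u)))].

Definition is_tree (t : rel N) : Prop :=
  [/\ symmetric t, irreflexive t, (forall x y, connect t x y) &
      (forall u w, t u w -> ~~ connect (remove_edge t u w) u w)].

Definition tdeg (t : rel N) (u : N) : nat := #|[set w | t u w]|.

Definition leaves (t : rel N) : {set N} := [set u | tdeg t u <= 1].

Definition branch_decomp (VG : {set U}) (t : rel N) (delta : N -> U) : Prop :=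
  [/\ is_tree t, (forall u, tdeg t u <= 3),
      {in leaves t &, injective delta} & delta @: leaves t = VG].

Definition edge_cut (t : rel N) (delta : N -> U) (u w : N) : {set U} :=
  delta @: [set l in leaves t | connect (remove_edge t u w) u l].

End Branch.

(* Main.v *)
Require Import Defs.
From mathcomp Require Import all_boot.
Set Implicit Arguments.
Unset Strict Implicit.
Unset Printing Implicit Defensive.

Lemma connect_closed_set (T : finType) (e : rel T) (S : T -> Prop) x y :
  (forall a b, e a b -> S a -> S b) -> connect e x y -> S x -> S y.
Proof.
move=> H /connectP [q pq ->]; elim: q x pq => //= z q IH x /andP [exz pq] xS.
exact: IH pq (H _ _ exz xS).
Qed.

Lemma connect_map (T T' : finType) (e : rel T) (e' : rel T') (f : T -> T') x y :
  (forall a b, e a b -> e' (f a) (f b)) -> connect e x y -> connect e' (f x) (f y).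
Proof.
move=> H /connectP [q pq ->]; elim: q x pq => //= z q IH x /andP [exz pq].
apply: connect_trans (connect1 (H _ _ exz)) (IH _ pq).
Qed.

Lemma pvP (U : finType) (d : graph U) (s : seq (graph U)) x :
  reflect (exists j : 'I_(size s), x \in gV (nth d s j)) (x \in parts_verts s).
Proof.
rewrite /parts_verts (big_nth d) big_mkord.
apply: (iffP bigcupP) => [[j _ h]|[j h]]; by exists j.
Qed.

Lemma sd_adj_sym (U : finType) (G : graph U) (p : seq (graph U)) (j l : 'I_(size p)) :
  sd_adj G j l = sd_adj G l j.
Proof.
rewrite /sd_adj eq_sym; congr (_ && _).
apply/existsP/existsP => [] [u /and3P [a b c]]; exists u; by rewrite a b c.
Qed.

Lemma notI (U : finType) (G : graph U) (p : seq (graph U)) (i j l : 'I_(size p)) :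
  connect (sd_adj_minus G i) j l -> j != i -> l != i.
Proof.
move=> c; apply: (connect_closed_set (S := fun z => z != i)) c => a b.
by case/and3P.
Qed.
Section Block.
Variables (U : finType) (G Go Gx : graph U) (Vo Vx : {set U}) (m : U)
  (po px p : seq (graph U)).
Variables (eo : 'I_(size po) -> 'I_(size p)) (ex : 'I_(size px) -> 'I_(size p)).
Hypotheses
 (hVG : forall x, (x \in gV G) = (x \in Vo) || (x \in Vx))
 (hdisj : forall x, x \in Vo -> x \in Vx -> False)
 (hm : m \notin gV G)
 (hGo : gV Go = m |: Vo) (hGx : gV Gx = m |: Vx)
 (hI : forall x, x \in parts_verts po -> x \in parts_verts px -> x = m)
 (I1o : forall x, x \in gV Go -> x \in parts_verts po)
 (I1x : forall x, x \in gV Gx -> x \in parts_verts px)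
 (I2o : forall x (j l : 'I_(size po)), x \in gV Go ->
     x \in gV (nth Go po j) -> x \in gV (nth Go po l) -> j = l)
 (I2x : forall x (j l : 'I_(size px)), x \in gV Gx ->
     x \in gV (nth Gx px j) -> x \in gV (nth Gx px l) -> j = l)
 (I3o : forall j l : 'I_(size po), connect (sd_adj Go (p:=po)) j l)
 (I3x : forall j l : 'I_(size px), connect (sd_adj Gx (p:=px)) j l)
 (heo : forall j, nth G p (eo j) = nth Go po j)
 (hex : forall j, nth G p (ex j) = nth Gx px j)
 (inj_eo : injective eo) (inj_ex : injective ex)
 (hcov : forall l, (exists j, l = eo j) \/ (exists j, l = ex j))
 (hdis : forall j l, eo j != ex l).

Lemma memo (j : 'I_(size po)) x : x \in gV (nth Go po j) -> x \in parts_verts po.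
Proof. by move=> h; apply/(pvP Go); exists j. Qed.
Lemma memx (j : 'I_(size px)) x : x \in gV (nth Gx px j) -> x \in parts_verts px.
Proof. by move=> h; apply/(pvP Gx); exists j. Qed.

Lemma VoGo x : x \in Vo -> x \in gV Go.
Proof. by move=> h; rewrite hGo setU1r. Qed.
Lemma VxGx x : x \in Vx -> x \in gV Gx.
Proof. by move=> h; rewrite hGx setU1r. Qed.
Lemma mGo : m \in gV Go. Proof. by rewrite hGo setU11. Qed.
Lemma mGx : m \in gV Gx. Proof. by rewrite hGx setU11. Qed.
Lemma mVo : m \notin Vo. Proof. by apply: contra hm; rewrite hVG => ->. Qed.
Lemma mVx : m \notin Vx. Proof. by apply: contra hm; rewrite hVG orbC => ->. Qed.

Lemma po_VG x (j : 'I_(size po)) : x \in gV (nth Go po j) -> x \in gV G -> x \in Vo.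
Proof.
move=> hx; rewrite hVG; case/orP => // hx'.
have := hI (memo hx) (I1x (VxGx hx')) => e; subst x.
by rewrite (negbTE mVx) in hx'.
Qed.

Lemma px_VG x (j : 'I_(size px)) : x \in gV (nth Gx px j) -> x \in gV G -> x \in Vx.
Proof.
move=> hx; rewrite hVG; case/orP => // hx'.
have := hI (I1o (VoGo hx')) (memx hx) => e; subst x.
by rewrite (negbTE mVo) in hx'.
Qed.

Lemma nGo_nVG u (j : 'I_(size po)) : u \in gV (nth Go po j) -> u \notin gV Go -> u \notin gV G.
Proof.
move=> hu hn; apply/negP => hG; have := po_VG hu hG => h.
by rewrite (VoGo h) in hn.
Qed.

Lemma nGx_nVG u (j : 'I_(size px)) : u \in gV (nth Gx px j) -> u \notin gV Gx -> u \notin gV G.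
Proof.
move=> hu hn; apply/negP => hG; have := px_VG hu hG => h.
by rewrite (VxGx h) in hn.
Qed.

Lemma edge_o (j l : 'I_(size po)) : sd_adj Go j l -> sd_adj G (eo j) (eo l).
Proof.
case/andP => jl /existsP [u /and3P [h1 h2 h3]].
apply/andP; split; first by rewrite (inj_eq inj_eo).
apply/existsP; exists u; by rewrite !heo h2 h3 (nGo_nVG h2 h1).
Qed.

Lemma edge_x (j l : 'I_(size px)) : sd_adj Gx j l -> sd_adj G (ex j) (ex l).
Proof.
case/andP => jl /existsP [u /and3P [h1 h2 h3]].
apply/andP; split; first by rewrite (inj_eq inj_ex).
apply/existsP; exists u; by rewrite !hex h2 h3 (nGx_nVG h2 h1).
Qed.

Lemma edge_oo (j l : 'I_(size po)) : sd_adj G (eo j) (eo l) -> sd_adj Go j l.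
Proof.
case/andP => jl /existsP [u /and3P [h1 h2 h3]].
rewrite !heo in h2 h3.
apply/andP; split; first by rewrite (inj_eq inj_eo) in jl.
apply/existsP; exists u; rewrite h2 h3 !andbT.
apply/negP => hu.
have um : u = m.
  move: hu; rewrite hGo => /setU1P [//|hu].
  by move: h1; rewrite hVG hu.
subst u; move: jl; by rewrite (I2o mGo h2 h3) eqxx.
Qed.

Lemma cross_o (j : 'I_(size po)) (l : 'I_(size px)) :
  sd_adj G (eo j) (ex l) -> m \in gV (nth Go po j).
Proof.
case/andP => _ /existsP [u /and3P [h1 h2 h3]].
rewrite heo in h2; rewrite hex in h3.
by rewrite -(hI (memo h2) (memx h3)).
Qed.

Lemma ex_jo : exists jo : 'I_(size po), m \in gV (nth Go po jo).
Proof. exact/(pvP Go)/I1o/mGo. Qed.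
Lemma ex_jx : exists jx : 'I_(size px), m \in gV (nth Gx px jx).
Proof. exact/(pvP Gx)/I1x/mGx. Qed.

Lemma cross_edge (jo : 'I_(size po)) (jx : 'I_(size px)) : m \in gV (nth Go po jo) -> m \in gV (nth Gx px jx) ->
  sd_adj G (eo jo) (ex jx).
Proof.
move=> h1 h2; apply/andP; split; first exact: hdis.
by apply/existsP; exists m; rewrite heo hex h1 h2 hm.
Qed.

Lemma C1 x : x \in gV G -> x \in parts_verts p.
Proof.
rewrite hVG => /orP [h|h].
  have /(pvP Go) [j hj] := I1o (VoGo h).
  by apply/(pvP G); exists (eo j); rewrite heo.
have /(pvP Gx) [j hj] := I1x (VxGx h).
by apply/(pvP G); exists (ex j); rewrite hex.
Qed.

Lemma C2 x (j l : 'I_(size p)) : x \in gV G ->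
  x \in gV (nth G p j) -> x \in gV (nth G p l) -> j = l.
Proof.
move=> hx.
have Hc := hcov.
case: (hcov j) => [[j' ->]|[j' ->]]; case: (hcov l) => [[l' ->]|[l' ->]];
  rewrite ?heo ?hex => h1 h2.
- by rewrite (I2o (VoGo (po_VG h1 hx)) h1 h2).
- by case: (hdisj (po_VG h1 hx) (px_VG h2 hx)).
- by case: (hdisj (po_VG h2 hx) (px_VG h1 hx)).
- by rewrite (I2x (VxGx (px_VG h1 hx)) h1 h2).
Qed.

Lemma C3 (j l : 'I_(size p)) : connect (sd_adj G (p:=p)) j l.
Proof.
have [jo hjo] := ex_jo; have [jx hjx] := ex_jx.
have ce := cross_edge hjo hjx.
suff H : forall j, connect (sd_adj G (p:=p)) j (eo jo).
  apply: connect_trans (H j) _.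
  rewrite (sym_connect_sym (e:=sd_adj G (p:=p))); first exact: H.
  by move=> a b; rewrite sd_adj_sym.
move=> j0; case: (hcov j0) => [[j' ->]|[j' ->]].
  exact: connect_map edge_o (I3o _ _).
apply: connect_trans (connect_map edge_x (I3x j' jx)) _.
by apply: connect1; rewrite sd_adj_sym.
Qed.

Definition liftv x := if x \in Vo then x else m.

Lemma liftGo x : x \in gV G -> liftv x \in gV Go.
Proof.
rewrite /liftv; case: ifP => h _; [exact: VoGo | exact: mGo].
Qed.

Section TotI.
Variable (i' : 'I_(size po)).

Lemma edge_om (j l : 'I_(size po)) : sd_adj_minus Go i' j l ->
  sd_adj_minus G (eo i') (eo j) (eo l).
Proof.
case/and3P => h1 h2 h3; apply/and3P; split; rewrite ?(inj_eq inj_eo) //.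
exact: edge_o.
Qed.

Lemma conn_om (j l : 'I_(size po)) : connect (sd_adj_minus Go i') j l ->
  connect (sd_adj_minus G (eo i')) (eo j) (eo l).
Proof. exact: connect_map edge_om. Qed.

Lemma conn_xm (j l : 'I_(size px)) : connect (sd_adj_minus G (eo i')) (ex j) (ex l).
Proof.
apply: connect_map (I3x j l) => a b h; apply/and3P; split; last exact: edge_x.
- by rewrite eq_sym hdis.
- by rewrite eq_sym hdis.
Qed.

Lemma closure_o (j' : 'I_(size po)) l :
  connect (sd_adj_minus G (eo i')) (eo j') l ->
  (exists l', l = eo l' /\ connect (sd_adj_minus Go i') j' l') \/
  ((exists l', l = ex l') /\
    exists jo : 'I_(size po), m \in gV (nth Go po jo) /\ connect (sd_adj_minus Go i') j' jo).
Proof.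
move=> c; apply: (connect_closed_set (S := fun l =>
  (exists l', l = eo l' /\ connect (sd_adj_minus Go i') j' l') \/
  ((exists l', l = ex l') /\
    exists jo : 'I_(size po), m \in gV (nth Go po jo) /\ connect (sd_adj_minus Go i') j' jo)) _ c);
  last by left; exists j'.
move=> a b /and3P [ha hb hab].
case: (hcov a) => [[a' ea]|[a' ea]]; case: (hcov b) => [[b' eb]|[b' eb]]; subst a b.
- move=> [[l' [/inj_eo <- cl]]|[[l' el] _]]; last by move: (hdis a' l'); rewrite el eqxx.
  left; exists b'; split => //; apply: connect_trans cl (connect1 _).
  apply/and3P; split; rewrite -?(inj_eq inj_eo) //; exact: edge_oo.
- move=> [[l' [/inj_eo <- cl]]|[[l' el] _]]; last by move: (hdis a' l'); rewrite el eqxx.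
  right; split; first by exists b'.
  by exists a'; split => //; exact: cross_o hab.
- move=> [[l' [el _]]|[_ [jo [hjo cl]]]]; first by move: (hdis l' a'); rewrite el eqxx.
  left; exists b'; split => //.
  rewrite sd_adj_sym in hab; have hm' := cross_o hab.
  by rewrite -(I2o mGo hjo hm').
- move=> [[l' [el _]]|[_ [jo [hjo cl]]]]; first by move: (hdis l' a'); rewrite el eqxx.
  by right; split; [exists b' | exists jo].
Qed.

Variable v : U.
Hypothesis hv : v \in gV (nth Go po i').

Lemma tot_lift x : x \in gV G ->
  (x \in tot G (eo i') v) = (liftv x \in tot Go i' v).
Proof.
move=> hx; rewrite /tot.
have hvpo : v \in parts_verts po := memo hv.
case hvGo : (v \in gV Go).
- move: hvGo; rewrite hGo => /setU1P [vm|vVo].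
  + subst v; rewrite (negbTE hm) !inE /liftv.
    have -> : (if x \in Vo then x else m) == m = (x \notin Vo).
      by case: ifP => hxo; rewrite ?eqxx //; apply/eqP => e; subst x; move: mVo; rewrite hxo.
    rewrite hx /=; apply/existsP/idP.
    * move=> [j /existsP [l /and4P [jne mj cjl xl]]].
      case: (hcov j) => [[j'' ej]|[j'' ej]]; subst j.
        rewrite heo in mj; move: jne; by rewrite (I2o mGo mj hv) eqxx.
      have : exists l', l = ex l'.
        apply: (connect_closed_set (S := fun l => exists l', l = ex l') _ cjl); last by exists j''.
        move=> a b /and3P [_ hb hab] [a' ea]; subst a.
        case: (hcov b) => [[b' eb]|//]; subst b.
        rewrite sd_adj_sym in hab; have hmb := cross_o hab.
        by move: hb; rewrite (I2o mGo hmb hv) eqxx.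
      move=> [l' el]; subst l; rewrite hex in xl.
      apply/negP => xo; exact: hdisj xo (px_VG xl hx).
    * move=> xno.
      have xVx : x \in Vx by move: hx; rewrite hVG (negbTE xno).
      have [jx hjx] := ex_jx.
      have /(pvP Gx) [lx hlx] := I1x (VxGx xVx).
      exists (ex jx); apply/existsP; exists (ex lx); apply/and4P; split.
      -- by rewrite eq_sym hdis.
      -- by rewrite hex.
      -- exact: conn_xm.
      -- by rewrite hex.
  + have vG : v \in gV G by rewrite hVG vVo.
    rewrite vG !inE /liftv; case: ifP => hxo //.
    rewrite (_ : (m == v) = false); last by apply/eqP => e; subst v; move: mVo; rewrite vVo.
    by apply/eqP => e; subst x; rewrite vVo in hxo.
- have vnG : v \notin gV G by apply: nGo_nVG hv _; rewrite hvGo.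
  rewrite (negbTE vnG) !inE hx liftGo //=.
  apply/existsP/existsP.
  + move=> [j /existsP [l /and4P [jne vj cjl xl]]].
    case: (hcov j) => [[j'' ej]|[j'' ej]]; subst j; last first.
      rewrite hex in vj; have := hI hvpo (memx vj) => e; subst v.
      by rewrite mGo in hvGo.
    rewrite heo in vj.
    have jne' : j'' != i' by rewrite -(inj_eq inj_eo).
    case: (closure_o cjl) => [[l' [el cl]]|[[l' el] [jo [hjo cl]]]]; subst l.
    * rewrite heo in xl; have xo := po_VG xl hx.
      exists j''; apply/existsP; exists l'; apply/and4P; split => //.
      by rewrite /liftv xo.
    * rewrite hex in xl; have xo := px_VG xl hx.
      have xno : x \in Vo = false by apply/negP => h; exact: hdisj h xo.
      exists j''; apply/existsP; exists jo; apply/and4P; split => //.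
      by rewrite /liftv xno.
  + move=> [j' /existsP [l' /and4P [jne vj cjl xl]]].
    exists (eo j'); apply/existsP.
    have jne2 : eo j' != eo i' by rewrite (inj_eq inj_eo).
    move: xl; rewrite /liftv; case: ifP => xo xl.
    * exists (eo l'); apply/and4P; split; rewrite ?heo //; exact: conn_om.
    * have xVx : x \in Vx by move: hx; rewrite hVG xo.
      have [jx hjx] := ex_jx.
      have /(pvP Gx) [lx hlx] := I1x (VxGx xVx).
      exists (ex lx); apply/and4P; split; rewrite ?heo ?hex //.
      apply: connect_trans (conn_om cjl) _.
      apply: connect_trans (conn_xm jx lx).
      apply: connect1; apply/and3P; split.
      -- by rewrite (inj_eq inj_eo); exact: notI cjl jne.
      -- by rewrite eq_sym hdis.
      -- exact: cross_edge.
Qed.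

End TotI.

Section Step.
Hypothesis hsymG : forall a b, gE G a b = gE G b a.
Hypothesis hEo : forall x y, gE Go x y =
  [|| [&& x \in Vo, y \in Vo & gE G x y], (x == m) && (y \in nbhd G Vx) |
      (y == m) && (x \in nbhd G Vx)].
Hypothesis hcb : forall x y, x \in Vo -> y \in Vx -> x \in nbhd G Vx ->
  y \in nbhd G Vo -> gE G x y.
Hypothesis IHo : forall (i : 'I_(size po)) a b x y,
  a \in gV (nth Go po i) -> b \in gV (nth Go po i) -> gE (nth Go po i) a b ->
  x \in act Go i a -> y \in act Go i b -> gE Go x y.

Lemma actP (H : graph U) (q : seq (graph U)) (i : 'I_(size q)) v x :
  reflect ([/\ x \in gV H, x \in tot H i v &
    exists2 z, z \in gV H /\ z \notin tot H i v & gE H z x])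
  (x \in act H i v).
Proof.
rewrite /act /nbhd !inE; apply: (iffP and3P).
- move=> [h1 h2 /existsP [z /andP [hz /andP [_ e]]]].
  move: h2; rewrite h1 andbT negbK => h2.
  move: hz; rewrite inE => /andP [hz1 hz2].
  by split => //; exists z.
- move=> [h1 h2 [z [hz1 hz2] e]]; split => //; first by rewrite h1 h2.
  by apply/existsP; exists z; rewrite !inE hz1 hz2 e.
Qed.

Variable (i' : 'I_(size po)) (v : U).
Hypothesis hv : v \in gV (nth Go po i').

Lemma liftm x : x \in gV G -> x \notin Vo -> liftv x = m.
Proof. by rewrite /liftv => _ /negbTE ->. Qed.

Lemma act_lift x : x \in act G (eo i') v -> liftv x \in act Go i' v.
Proof.
case/actP => hx ht [z [hz hzt] e].
rewrite (tot_lift hv hx) in ht; rewrite (tot_lift hv hz) in hzt.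
apply/actP; split => //; first exact: liftGo.
exists (liftv z) => //; first by split => //; exact: liftGo.
rewrite hEo /liftv.
case: ifP => zo; case: ifP => xo.
- by rewrite zo xo e.
- have xVx : x \in Vx by move: hx; rewrite hVG xo.
  apply/orP; right; apply/orP; right; rewrite eqxx /= /nbhd !inE hz.
  have -> : z \notin Vx by apply/negP => h; exact: hdisj zo h.
  by apply/existsP; exists x; rewrite xVx hx -hsymG e.
- have zVx : z \in Vx by move: hz; rewrite hVG zo.
  apply/orP; right; apply/orP; left; rewrite eqxx /= /nbhd !inE hx.
  have -> : x \notin Vx by apply/negP => h; exact: hdisj xo h.
  by apply/existsP; exists z; rewrite zVx hz e.
- by move: hzt ht; rewrite /liftv zo xo => /negP.
Qed.

Lemma act_nb x : x \in act G (eo i') v -> x \notin Vo -> x \in nbhd G Vo.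
Proof.
move=> ha xno; case/actP: ha => hx ht [z [hz hzt] e].
rewrite (tot_lift hv hx) in ht; rewrite (tot_lift hv hz) in hzt.
case zo : (z \in Vo); last first.
  by move: hzt ht; rewrite /liftv zo (negbTE xno) => /negP.
rewrite /nbhd !inE hx xno /=; apply/existsP; exists z; by rewrite zo hz e.
Qed.

End Step.

Lemma KP_o (i' : 'I_(size po)) a b x y :
  (forall a b, gE G a b = gE G b a) ->
  (forall x y, gE Go x y =
  [|| [&& x \in Vo, y \in Vo & gE G x y], (x == m) && (y \in nbhd G Vx) |
      (y == m) && (x \in nbhd G Vx)]) ->
  (forall x y, x \in Vo -> y \in Vx -> x \in nbhd G Vx ->
    y \in nbhd G Vo -> gE G x y) ->
  (forall (i : 'I_(size po)) a b x y,
    a \in gV (nth Go po i) -> b \in gV (nth Go po i) -> gE (nth Go po i) a b ->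
    x \in act Go i a -> y \in act Go i b -> gE Go x y) ->
  a \in gV (nth G p (eo i')) -> b \in gV (nth G p (eo i')) ->
  gE (nth G p (eo i')) a b ->
  x \in act G (eo i') a -> y \in act G (eo i') b -> gE G x y.
Proof.
move=> hsymG hEo hcb IHo; rewrite heo => ha hb hab hxa hyb.
have := IHo _ _ _ _ _ ha hb hab (act_lift hsymG hEo ha hxa) (act_lift hsymG hEo hb hyb).
have hx : x \in gV G by case/actP: hxa.
have hy : y \in gV G by case/actP: hyb.
have mnb : forall S, m \in nbhd G S = false.
  by move=> S; rewrite /nbhd inE (negbTE hm).
have mVoF := negbTE mVo.
rewrite hEo /liftv; case: ifP => xo; case: ifP => yo.
- case/or3P => [/and3P [] //|/andP [/eqP e _]|/andP [/eqP e _]].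
  + by move: xo; rewrite e mVoF.
  + by move: yo; rewrite e mVoF.
- have yVx : y \in Vx by move: hy; rewrite hVG yo.
  have ynb := act_nb hb hyb (negbT yo).
  rewrite mVoF.
  case/or3P => [/and3P [_ F _] //|/andP [/eqP e _]|/andP [_ xnb]].
  + by move: xo; rewrite e mVoF.
  + exact: hcb.
- have xVx : x \in Vx by move: hx; rewrite hVG xo.
  have xnb := act_nb ha hxa (negbT xo).
  rewrite mVoF.
  case/or3P => [/and3P [F _ _] //|/andP [_ ynb]|/andP [/eqP e _]].
  + by rewrite hsymG; apply: hcb.
  + by move: yo; rewrite e mVoF.
- by rewrite !mnb !andbF mVoF.
Qed.
End Block.

Section Emb.
Variables (T : Type) (p1 p2 : seq T).
Lemma e1P (j : 'I_(size p1)) : j < size (p1 ++ p2).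
Proof. by rewrite size_cat (leq_trans (ltn_ord j) (leq_addr _ _)). Qed.
Lemma e2P (j : 'I_(size p2)) : size p1 + j < size (p1 ++ p2).
Proof. by rewrite size_cat ltn_add2l. Qed.
Definition e1 (j : 'I_(size p1)) : 'I_(size (p1 ++ p2)) := Ordinal (e1P j).
Definition e2 (j : 'I_(size p2)) : 'I_(size (p1 ++ p2)) := Ordinal (e2P j).

Lemma e1_inj : injective e1.
Proof. by move=> a b /(congr1 val) /= /val_inj. Qed.
Lemma e2_inj : injective e2.
Proof. by move=> a b /(congr1 val) /= /addnI /val_inj. Qed.
Lemma e12 j l : e1 j != e2 l.
Proof. by rewrite -val_eqE /= neq_ltn (leq_trans (ltn_ord j) (leq_addr _ _)). Qed.
Lemma e21 j l : e2 l != e1 j.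
Proof. by rewrite eq_sym e12. Qed.
Lemma e_cov l : (exists j, l = e1 j) \/ (exists j, l = e2 j).
Proof.
case: (ltnP l (size p1)) => h.
  by left; exists (Ordinal h); apply: val_inj.
have h2 : l - size p1 < size p2.
  by rewrite ltn_subLR // -size_cat.
by right; exists (Ordinal h2); apply: val_inj => /=; rewrite subnKC.
Qed.
Lemma e1_nth d d' j : nth d (p1 ++ p2) (e1 j) = nth d' p1 j.
Proof. by rewrite /= nth_cat ltn_ord; apply: set_nth_default. Qed.
Lemma e2_nth d d' j : nth d (p1 ++ p2) (e2 j) = nth d' p2 j.
Proof.
rewrite /= nth_cat ltnNge leq_addr /= addKn; apply: set_nth_default.
exact: ltn_ord.
Qed.
End Emb.

Section Ind.
Variable U : finType.

Lemma split_cb (G : graph U) V1 x y : (forall a b, gE G a b = gE G b a) ->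
  is_split G V1 -> x \in V1 -> y \in gV G :\: V1 ->
  x \in nbhd G (gV G :\: V1) -> y \in nbhd G V1 -> gE G x y.
Proof.
move=> hs /and4P [_ _ _ /forallP H] xV yV2.
rewrite /nbhd !inE => /and3P [_ _ /existsP [z /andP [z2 /andP [_ ezx]]]].
move=> /and3P [_ _ /existsP [w /andP [w1 /andP [_ ewy]]]].
have := H x; rewrite xV /= => /forallP /(_ w); rewrite w1 /=.
have -> : [exists z0 in gV G :\: V1, gE G x z0].
  by apply/existsP; exists z; rewrite z2 -hs ezx.
have -> : [exists z0 in gV G :\: V1, gE G w z0].
  by apply/existsP; exists y; rewrite yV2 ewy.
move=> /= /eqP /setP /(_ y); rewrite !inE.
by move: yV2; rewrite inE => ->; rewrite ewy /= => ->.
Qed.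

Definition Inv (G : graph U) (p : seq (graph U)) :=
 [/\ forall x, x \in gV G -> x \in parts_verts p,
     forall x (j l : 'I_(size p)), x \in gV G -> x \in gV (nth G p j) ->
        x \in gV (nth G p l) -> j = l,
     forall j l : 'I_(size p), connect (sd_adj G (p:=p)) j l &
     forall (i : 'I_(size p)) a b x y, a \in gV (nth G p i) ->
       b \in gV (nth G p i) -> gE (nth G p i) a b ->
       x \in act G i a -> y \in act G i b -> gE G x y].

Lemma sym_left (G : graph U) V1 m : (forall a b, gE G a b = gE G b a) ->
  forall a b, gE (split_left G V1 m) a b = gE (split_left G V1 m) b a.
Proof.
move=> hs a b /=.
have -> : [&& b \in V1, a \in V1 & gE G b a] = [&& a \in V1, b \in V1 & gE G a b].
  by rewrite hs andbCA.
by congr (_ || _); exact: orbC.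
Qed.

Lemma sym_right (G : graph U) V1 m : (forall a b, gE G a b = gE G b a) ->
  forall a b, gE (split_right G V1 m) a b = gE (split_right G V1 m) b a.
Proof.
move=> hs a b /=.
have -> : [&& b \in gV G :\: V1, a \in gV G :\: V1 & gE G b a] =
  [&& a \in gV G :\: V1, b \in gV G :\: V1 & gE G a b].
  by rewrite hs andbCA.
by congr (_ || _); exact: orbC.
Qed.

End Ind.

Section Ind2.
Variable U : finType.

Lemma inv_base (G : graph U) : Inv G [:: G].
Proof.
have o1 : forall j : 'I_(size [:: G]), j = ord0 by move=> j; apply: val_inj; case: j => [[]].
split.
- by move=> x hx; apply/(pvP G); exists ord0.
- by move=> x j l _ _ _; rewrite (o1 j) (o1 l).
- by move=> j l; rewrite (o1 j) (o1 l) connect0.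
- move=> i a b x y; rewrite (o1 i) /= => ha hb hab /actP [_ hx _] /actP [_ hy _].
  move: hx hy; rewrite /tot ha hb !inE => /eqP -> /eqP ->; exact: hab.
Qed.

Lemma inv_sd (G : graph U) p : split_decomp G p ->
  (forall a b, gE G a b = gE G b a) -> Inv G p.
Proof.
elim => {G p} [G _|G V1 m p1 p2 hs hmG _ IH1 _ IH2 hI] hsym; first exact: inv_base.
have [I1o I2o I3o KPo] := IH1 (sym_left V1 m hsym).
have [I1x I2x I3x KPx] := IH2 (sym_right V1 m hsym).
have sub : V1 \subset gV G by case/and4P: hs.
have hVG1 : forall x, (x \in gV G) = (x \in V1) || (x \in gV G :\: V1).
  move=> x; rewrite inE; case h: (x \in V1) => //=; exact: (subsetP sub).
have hVG2 : forall x, (x \in gV G) = (x \in gV G :\: V1) || (x \in V1).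
  by move=> x; rewrite orbC.
have hdisj1 : forall x, x \in V1 -> x \in gV G :\: V1 -> False.
  by move=> x h; rewrite inE h.
have hdisj2 : forall x, x \in gV G :\: V1 -> x \in V1 -> False.
  by move=> x h1 h2; exact: hdisj1 h2 h1.
have hI1 : forall x, x \in parts_verts p1 -> x \in parts_verts p2 -> x = m.
  by move=> x h1 h2; apply/set1P; rewrite -hI inE h1 h2.
have hI2 : forall x, x \in parts_verts p2 -> x \in parts_verts p1 -> x = m.
  by move=> x h1 h2; exact: hI1.
have heo1 : forall j : 'I_(size p1), nth G (p1 ++ p2) (@e1 _ p1 p2 j) = nth (split_left G V1 m) p1 j.
  by move=> j; apply: e1_nth.
have hex1 : forall j : 'I_(size p2), nth G (p1 ++ p2) (@e2 _ p1 p2 j) = nth (split_right G V1 m) p2 j.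
  by move=> j; apply: e2_nth.
have hcb1 : forall x y, x \in V1 -> y \in gV G :\: V1 ->
    x \in nbhd G (gV G :\: V1) -> y \in nbhd G V1 -> gE G x y.
  by move=> x y; apply: split_cb.
have hcb2 : forall x y, x \in gV G :\: V1 -> y \in V1 ->
    x \in nbhd G V1 -> y \in nbhd G (gV G :\: V1) -> gE G x y.
  by move=> x y h1 h2 h3 h4; rewrite hsym; apply: hcb1.
have hcov2 : forall l : 'I_(size (p1 ++ p2)),
  (exists j, l = @e2 _ p1 p2 j) \/ (exists j, l = @e1 _ p1 p2 j).
  by move=> l; case: (e_cov l); [right|left].
have hdis2 : forall (j : 'I_(size p2)) (l : 'I_(size p1)), @e2 _ p1 p2 j != @e1 _ p1 p2 l.
  by move=> j l; apply: e21.
split.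
- exact: (C1 (Go := split_left G V1 m) (Gx := split_right G V1 m)
   (Vo := V1) (Vx := gV G :\: V1) (m := m) (po := p1) (px := p2)
   (eo := @e1 _ p1 p2) (ex := @e2 _ p1 p2) hVG1 (erefl _) (erefl _) I1o I1x heo1 hex1).
- move=> x j l.
  exact: (C2 (Go := split_left G V1 m) (Gx := split_right G V1 m)
   (Vo := V1) (Vx := gV G :\: V1) (m := m) (po := p1) (px := p2)
   (eo := @e1 _ p1 p2) (ex := @e2 _ p1 p2) hVG1 hdisj1 hmG (erefl _) (erefl _) hI1 I1o I1x
   I2o I2x heo1 hex1 (@e_cov _ p1 p2)).
- exact: (C3 (Go := split_left G V1 m) (Gx := split_right G V1 m)
   (Vo := V1) (Vx := gV G :\: V1) (m := m) (po := p1) (px := p2)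
   (eo := @e1 _ p1 p2) (ex := @e2 _ p1 p2) hVG1 hmG (erefl _) (erefl _) hI1 I1o I1x
   I3o I3x heo1 hex1 (@e1_inj _ p1 p2) (@e2_inj _ p1 p2)
   (@e_cov _ p1 p2) (@e12 _ p1 p2)).
- move=> i a b x y; case: (e_cov i) => [[i' ->]|[i' ->]].
  + exact: (KP_o (Go := split_left G V1 m) (Gx := split_right G V1 m)
     (Vo := V1) (Vx := gV G :\: V1) (m := m) (po := p1) (px := p2)
     (eo := @e1 _ p1 p2) (ex := @e2 _ p1 p2) hVG1 hdisj1 hmG (erefl _) (erefl _) hI1 I1o I1x
     I2o I3x heo1 hex1 (@e1_inj _ p1 p2) (@e2_inj _ p1 p2)
     (@e_cov _ p1 p2) (@e12 _ p1 p2) hsym (fun x y => erefl) hcb1 KPo).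
  + exact: (KP_o (Go := split_right G V1 m) (Gx := split_left G V1 m)
     (Vo := gV G :\: V1) (Vx := V1) (m := m) (po := p2) (px := p1)
     (eo := @e2 _ p1 p2) (ex := @e1 _ p1 p2) hVG2 hdisj2 hmG (erefl _) (erefl _) hI2 I1x I1o
     I2x I3o hex1 heo1 (@e2_inj _ p1 p2) (@e1_inj _ p1 p2)
     hcov2 hdis2 hsym (fun x y => erefl) hcb2 KPx).
Qed.
End Ind2.

Theorem mainTheorem3 (U : finType) (VG : {set U}) (eG : rel U)
  (Hsym : symmetric eG) (Hirr : irreflexive eG)
  (Hconn : connected_graph (Graph VG eG))
  (parts : seq (graph U)) (Hsd : split_decomp (Graph VG eG) parts)
  (i : 'I_(size parts))
  (Hnt : 3 < #|gV (nth (Graph VG eG) parts i)|)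
  (k : nat) (Hk : 0 < k)
  (N : finType) (t : rel N) (delta : N -> U)
  (HT : branch_decomp VG t delta)
  (Hw : forall u w, t u w -> sm (Graph VG eG) (edge_cut t delta u w) < k)
  (a : U) (Ha : a \in gV (nth (Graph VG eG) parts i))
  (u w : N) (Huw : t u w) :
  k <= #|edge_cut t delta u w :&: act (Graph VG eG) i a| ->
  k <= #|(VG :\: edge_cut t delta u w) :&:
          act_set (Graph VG eG) i (nbrs (nth (Graph VG eG) parts i) a)| ->
  is_split (Graph VG eG) (edge_cut t delta u w).
Proof.
move=> hA hB.
have [_ _ _ KP] := inv_sd Hsd (fun x y => Hsym x y).
set X := edge_cut t delta u w in hA hB *.
set G0 := Graph VG eG in KP hA hB *.
set P := nth G0 parts i in Ha hB KP *.
set A := X :&: act G0 i a in hA.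
set B := (VG :\: X) :&: act_set G0 i (nbrs P a) in hB.
apply/negPn/negP => nsp.
have := Hw u w Huw; rewrite /sm -/X (negbTE nsp) => hmm.
have cb : forall x y, x \in A -> y \in B -> eG x y.
  move=> x y /setIP [_ hx] /setIP [_ hy].
  move: hy; rewrite /act_set => /bigcupP [b]; rewrite inE => /and3P [hb _ hab] hy.
  by have := KP i a b x y Ha hb hab hx hy.
set sA := enum A; set sB := enum B.
have kA : k <= size sA by rewrite -cardE.
have kB : k <= size sB by rewrite -cardE.
pose f := fun n : 'I_k => (nth a sA n, nth a sB n).
have ltA : forall n : 'I_k, n < size sA by move=> n; exact: leq_trans (ltn_ord n) kA.
have ltB : forall n : 'I_k, n < size sB by move=> n; exact: leq_trans (ltn_ord n) kB.
have injA : forall n1 n2 : 'I_k, nth a sA n1 = nth a sA n2 -> n1 = n2.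
  move=> n1 n2 /eqP; rewrite nth_uniq ?ltA ?enum_uniq // => /eqP; exact: val_inj.
have injB : forall n1 n2 : 'I_k, nth a sB n1 = nth a sB n2 -> n1 = n2.
  move=> n1 n2 /eqP; rewrite nth_uniq ?ltB ?enum_uniq // => /eqP; exact: val_inj.
have finj : injective f by move=> n1 n2 [] /injA.
set M := f @: [set: 'I_k].
have hM : is_matching G0 X M.
  apply/andP; split.
  - apply/forallP => q; apply/implyP => /imsetP [n _ ->] /=.
    have hx : nth a sA n \in A by rewrite -mem_enum mem_nth.
    have hy : nth a sB n \in B by rewrite -mem_enum mem_nth.
    move: (hx) (hy); rewrite !inE => /andP [-> _] /andP [/andP [-> ->] _] /=.
    exact: cb.
  - apply/forallP => q; apply/implyP => /imsetP [n1 _ ->].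
    apply/forallP => r; apply/implyP => /imsetP [n2 _ ->] /=.
    apply/implyP => /orP [/eqP /injA -> | /eqP /injB ->] //.
have : #|M| <= mm G0 X.
  by rewrite /mm; exact: (leq_bigmax_cond (P := fun M => is_matching G0 X M) (F := fun M => #|M|) _ hM).
rewrite card_imset // cardsT card_ord => hk.
by move: (leq_ltn_trans hk hmm); rewrite ltnn.
Qed.
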